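(* Let $n\ge1$ and $1\le p\le 2n$. Then the elements $y_0^l y_p$, $l=0,1,\dots,n-v_p$, form a $k$-basis of $\mathcal P^p(\mathcal O_n)$. (Here products are taken in the graded algebra $\mathcal P(\mathcal O_n)$.)
   Context: $k$ is a field of characteristic zero, $\mathcal O_n=k[x]/(x^{n+1})$, elements of $\mathcal O_n$ identified with multiplication operators, $\operatorname{ad}_x(\delta)=x\delta-\delta x$. The order filtration is $\mathcal D^p(\mathcal O_n)=\{\delta\in\operatorname{End}_k(\mathcal O_n):[f_0,[f_1,\dots,[f_p,\delta]\dots]]=0\ \forall f_i\in\mathcal O_n\}$ ($\mathcal D^{-1}=0$); $\mathcal P(\mathcal O_n)=\bigoplus_{p\ge0}\mathcal P^p(\mathcal O_n)$ with $\mathcal P^p(\mathcal O_n)=\mathcal D^p(\mathcal O_n)/\mathcal D^{p-1}(\mathcal O_n)$ is the associated graded commutative algebra. For $\delta\in\mathcal D^p(\mathcal O_n)$, $\operatorname{ad}_x^p(\delta)$ is multiplication by an element of $\mathcal O_n$ and $\operatorname{ad}_x^p:\mathcal D^p(\mathcal O_n)\to\mathcal O_n$ is $\mathcal O_n$-linear, so its image is an ideal $(x^{v_p})$ of $\mathcal O_n$; $v_p\in\{0,\dots,n\}$ denotes the corresponding exponent. For $1\le p\le 2n$, choose $\delta_p\in\mathcal D^p(\mathcal O_n)$ with $\frac{1}{p!}\operatorname{ad}_x^p(\delta_p)=x^{v_p}$, and let $y_p\in\mathcal P^p(\mathcal O_n)$ be its class (independent of the choice). Let $y_0\in\mathcal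 P^0(\mathcal O_n)$ be the class of (multiplication by) $x$. *)

(* Defs.v *)
From HB Require Import structures.
From mathcomp Require Import all_boot all_order all_algebra.
Set Implicit Arguments. Unset Strict Implicit. Unset Printing Implicit Defensive.
Import GRing.Theory.
Local Open Scope ring_scope.

(* O_n = k[x]/(x^{n+1}) with k-basis 1, x, ..., x^n.  End_k(O_n) is represented
   by (n+1)x(n+1) matrices acting on coordinate column vectors; composition of
   operators is matrix product. *)

(* Multiplication by x: sends x^j to x^{j+1} (and x^n to 0). *)
Definition xop (k : fieldType) (n : nat) : 'M[k]_n.+1 :=
  \matrix_(i, j) ((i : nat) == (j : nat).+1)%:R.

(* Multiplication operator by the class of f in O_n. Every element of O_n is
   the class of some polynomial f. *)
Definition mulop (k : fieldType) (n : nat) (f : {poly k}) : 'M[k]_n.+1 :=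
  \sum_(i < size f) f`_i *: xop k n ^+ i.

Fixpoint comm_iter (k : fieldType) (n : nat) (fs : seq {poly k})
    (d : 'M[k]_n.+1) : 'M[k]_n.+1 :=
  match fs with
  | [::] => d
  | f :: fs' => mulop n f * @comm_iter k n fs' d - @comm_iter k n fs' d * mulop n f
  end.

Definition Dord (k : fieldType) (n p : nat) (d : 'M[k]_n.+1) : Prop :=
  forall fs : seq {poly k}, size fs = p.+1 -> comm_iter fs d = 0.

Definition adx (k : fieldType) (n : nat) (d : 'M[k]_n.+1) : 'M[k]_n.+1 :=
  xop k n * d - d * xop k n.

(* Main.v *)
Require Import Defs.
From HB Require Import structures.
From mathcomp Require Import all_boot all_order all_algebra.
From mathcomp Require Import zify.
Import GRing.Theory.
Local Open Scope ring_scope.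


Section S.
Variables (k : fieldType) (n : nat).
Local Notation X := (xop k n).
Local Notation M := 'M[k]_n.+1.

Lemma xopX j (i m : 'I_n.+1) : (X ^+ j) i m = ((i : nat) == (m + j)%N)%:R.
Proof.
elim: j i => [|j IH] i.
  by rewrite expr0 mxE addn0.
rewrite GRing.exprS mxE.
case: (eqVneq (i : nat) (m + j).+1) => [Hi|Hi].
  have Hlt : (m + j < n.+1)%N by have := ltn_ord i; rewrite Hi; lia.
  rewrite (bigD1 (Ordinal Hlt)) //= big1 ?addr0.
    by rewrite !mxE IH /= Hi addnS !eqxx mulr1.
  move=> t Ht; rewrite !mxE IH.
  case: (eqVneq (t : nat) (m + j)%N) => Et; last by rewrite mulr0.
  by case/negP: Ht; apply/eqP/val_inj.
rewrite addnS (negbTE Hi) big1 // => t _; rewrite !mxE IH.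
case: (eqVneq (t : nat) (m + j)%N) => Et; last by rewrite mulr0.
by rewrite Et (negbTE Hi) mul0r.
Qed.

Lemma xopX0 j : (n < j)%N -> X ^+ j = 0.
Proof.
move=> Hj; apply/matrixP => i m; rewrite xopX mxE.
case: eqP => // Ei; have := ltn_ord i; rewrite Ei; lia.
Qed.

Lemma mulopX : mulop n 'X = X.
Proof.
by rewrite /mulop size_polyX big_ord_recr big_ord1 /= coefX /= coefX /= scale0r add0r scale1r expr1.
Qed.

Lemma commrZ' (x y : M) (a : k) : GRing.comm x y -> GRing.comm x (a *: y).
Proof. by rewrite /GRing.comm -scalerAr -scalerAl => ->. Qed.

Lemma comm_mulop f : GRing.comm X (mulop n f).
Proof.
apply: commr_sum => i _; apply: commrZ'; exact: commrX.
Qed.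

Lemma comm_mulop_gen f (y : M) : GRing.comm X y -> GRing.comm (mulop n f) y.
Proof.
move=> H; apply: commr_sym; apply: commr_sum => i _; apply: commrZ'; apply: commrX.
exact: commr_sym.
Qed.

Lemma adx_br (F y : M) : GRing.comm X F ->
  adx (F * y - y * F) = F * adx y - adx y * F.
Proof.
move=> H; rewrite /adx !mulrBr !mulrBl !mulrA H -[y * F * X]mulrA -H mulrA.
rewrite !opprB addrACA [RHS]addrACA; congr (_ + _); exact: addrC.
Qed.

Lemma iter_adx_br m (F y : M) : GRing.comm X F ->
  iter m (@adx k n) (F * y - y * F) = F * iter m (@adx k n) y - iter m (@adx k n) y * F.
Proof. by move=> H; elim: m => //= m ->; rewrite adx_br. Qed.

Lemma comm_iter_nseq m (d : M) : comm_iter (nseq m 'X) d = iter m (@adx k n) d.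
Proof. by elim: m => //= m ->; rewrite mulopX. Qed.

Lemma comm_iter0 fs m (d : M) : iter (m + size fs) (@adx k n) d = 0 ->
  iter m (@adx k n) (comm_iter fs d) = 0.
Proof.
elim: fs m => [|f fs IH] m /=; first by rewrite addn0.
rewrite addnS -addSn => /IH H.
rewrite iter_adx_br; last exact: comm_mulop.
have : GRing.comm (mulop n f) (iter m (@adx k n) (comm_iter fs d)).
  apply: comm_mulop_gen; apply/eqP; rewrite -subr_eq0; apply/eqP.
  by rewrite -H /= /adx.
by move=> ->; rewrite subrr.
Qed.

Lemma DordP q (d : M) : Dord q d <-> iter q.+1 (@adx k n) d = 0.
Proof.
split.
  by move=> H; rewrite -comm_iter_nseq; apply: H; rewrite size_nseq.
move=> H fs Hs; apply: (@comm_iter0 fs 0); by rewrite add0n Hs.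
Qed.

Lemma adxD (y z : M) : adx (y + z) = adx y + adx z.
Proof. rewrite /adx mulrDr mulrDl; rewrite opprD !addrA; congr (_ + _); rewrite -!addrA; congr (_ + _); by rewrite addrC. Qed.
Lemma adxZ (a : k) (y : M) : adx (a *: y) = a *: adx y.
Proof. by rewrite /adx scalerBr -scalerAr -scalerAl. Qed.
Lemma adxN (y : M) : adx (- y) = - adx y.
Proof. by rewrite -scaleN1r adxZ scaleN1r. Qed.
Lemma adx0 : adx (0 : M) = 0.
Proof. by rewrite /adx mulr0 mul0r subrr. Qed.

Lemma iter_adxD m (y z : M) : iter m (@adx k n) (y + z) = iter m (@adx k n) y + iter m (@adx k n) z.
Proof. by elim: m => //= m ->; rewrite adxD. Qed.
Lemma iter_adxZ m a (y : M) : iter m (@adx k n) (a *: y) = a *: iter m (@adx k n) y.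
Proof. by elim: m => //= m ->; rewrite adxZ. Qed.
Lemma iter_adxN m (y : M) : iter m (@adx k n) (- y) = - iter m (@adx k n) y.
Proof. by elim: m => //= m ->; rewrite adxN. Qed.
Lemma iter_adx0 m : iter m (@adx k n) 0 = 0.
Proof. by elim: m => //= m ->; rewrite adx0. Qed.
Lemma iter_adx_sum m N (c : 'I_N -> k) (y : 'I_N -> M) :
  iter m (@adx k n) (\sum_l c l *: y l) = \sum_l c l *: iter m (@adx k n) (y l).
Proof.
rewrite (big_morph _ (iter_adxD m) (iter_adx0 m)).
by apply: eq_bigr => l _; rewrite iter_adxZ.
Qed.
Lemma iter_adxXl m l (y : M) : iter m (@adx k n) (X ^+ l * y) = X ^+ l * iter m (@adx k n) y.
Proof.
elim: m => //= m ->; rewrite /adx mulrBr mulrA.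
by rewrite (commrX l (commr_refl X)) -!mulrA.
Qed.
End S.

Lemma sum_widen (R : zmodType) N1 N2 (F : nat -> R) : (N1 <= N2)%N ->
  (forall i, (N1 <= i)%N -> (i < N2)%N -> F i = 0) ->
  \sum_(i < N1) F i = \sum_(i < N2) F i.
Proof.
move=> le H; rewrite (big_ord_widen _ _ le) big_mkcond /=.
apply: eq_bigr => i _; case: ifP => // /negbT; rewrite -leqNgt => Hi.
by rewrite H.
Qed.

Theorem lemma4 (k : fieldType) (hk : [pchar k] =i pred0)
  (n p : nat) (hn : (0 < n)%N) (hp1 : (0 < p)%N) (hp2 : (p <= 2 * n)%N)
  (v : nat) (hv : (v <= n)%N)
  (* image of ad_x^p : D^p -> O_n is the ideal (x^v) *)
  (himg : forall M : 'M[k]_n.+1,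
     (exists2 d, @Dord k n p d & iter p (@adx k n) d = M) <->
     (exists g : {poly k}, M = @mulop k n g * xop k n ^+ v))
  (* delta_p *)
  (d : 'M[k]_n.+1) (hd : @Dord k n p d)
  (hdv : (p`!%:R)^-1 *: iter p (@adx k n) d = xop k n ^+ v) :
  (* representatives of y_0^l y_p, l = 0..n-v *)
  let b := fun l : 'I_(n - v).+1 => xop k n ^+ l * d in
  (forall l, @Dord k n p (b l)) /\
  (forall c : 'I_(n - v).+1 -> k,
     @Dord k n p.-1 (\sum_l c l *: b l) -> forall l, c l = 0) /\
  (forall e, @Dord k n p e ->
     exists c : 'I_(n - v).+1 -> k, @Dord k n p.-1 (e - \sum_l c l *: b l)).
Proof.
move=> b.
have hfact : (p`!%:R : k) != 0.
  by rewrite ((pcharf0P _).1 hk) -lt0n fact_gt0.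
have hd' : iter p (@adx k n) d = p`!%:R *: xop k n ^+ v.
  by rewrite -hdv scalerA mulfV // scale1r.
have hd0 := (@DordP k n p d).1 hd.
split; first by move=> l; apply/DordP; rewrite /b iter_adxXl hd0 mulr0.
split.
  move=> c /DordP; rewrite prednK // iter_adx_sum => Hs l0.
  have Hs' : \sum_l (c l *: xop k n ^+ (l + v)) = 0.
    apply: (scalerI hfact); rewrite scaler0 scaler_sumr ; rewrite -[RHS]Hs; apply: eq_bigr => l _.
    by rewrite /b iter_adxXl hd' -scalerAr -exprD !scalerA mulrC.
  have Hl0 : (l0 + v < n.+1)%N by have := ltn_ord l0; lia.
  have := congr1 (fun A : 'M[k]_n.+1 => A (inord (l0 + v)) 0) Hs'.
  rewrite /= summxE mxE (bigD1 l0) //= big1.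
    by rewrite mxE xopX inordK // add0n eqxx mulr1 addr0.
  move=> l Hl; rewrite mxE xopX inordK // add0n.
  case: eqP; last by rewrite mulr0.
  by move/eqP; rewrite eqn_add2r => /eqP E; case/negP: Hl; apply/eqP/val_inj.
move=> e He.
have [g Hg] : exists g : {poly k}, iter p (@adx k n) e = mulop n g * xop k n ^+ v.
  by apply/himg; exists e.
exists (fun l : 'I_(n - v).+1 => g`_l / p`!%:R).
apply/DordP; rewrite prednK // iter_adxD iter_adxN iter_adx_sum Hg.
apply/eqP; rewrite subr_eq0; apply/eqP.
have -> : \sum_(l < (n - v).+1) (g`_l / p`!%:R) *: iter p (@adx k n) (b l)
    = \sum_(l < (n - v).+1) g`_l *: xop k n ^+ (l + v).
  apply: eq_bigr => l _.
  rewrite /b iter_adxXl hd' -scalerAr -exprD scalerA -mulrA mulVf // mulr1.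
  by rewrite addnC.
rewrite /mulop mulr_suml.
have -> : \sum_(i < size g) g`_i *: xop k n ^+ i * xop k n ^+ v
    = \sum_(i < size g) g`_i *: xop k n ^+ (i + v).
  by apply: eq_bigr => i _; rewrite -scalerAl -exprD.
rewrite (@sum_widen _ (size g) (size g + n.+1) (fun i => g`_i *: xop k n ^+ (i + v))) //; last first.
  by move=> i Hi _; rewrite nth_default // scale0r.
  by rewrite leq_addr.
rewrite (@sum_widen _ (n - v).+1 (size g + n.+1) (fun i => g`_i *: xop k n ^+ (i + v))) //.
  by have := hv; lia.
by move=> i Hi _; rewrite xopX0 ?scaler0 //; lia.
Qed.
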